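(* Let $(\Omega,\mathcal R,\mathcal K)$ be a bidirectional kinetic system satisfying the detailed balance property, and let $E$ be an energy of it. Let $U\subset\Omega$ be nonempty, $V=\Omega\setminus U$, $n_U\in(0,\infty)^{|U|}$, and consider the reduced system $(V,\mathcal R_V,\mathcal K[n_U])$. Assume that no $R\in\mathcal R$ has $\pi_VR=0$ and that every $R\in\mathcal R_V$ is a $1$-$1$ reaction. Let $n$ be a positive solution of the system with fluxes $$\frac{dn}{dt}=\sum_{R\in\mathcal R_s}RJ_R(n)+J^E(t),\qquad \pi_Un(0)=n_U.$$ Then $$\partial_tF(n)=-\mathcal D_R(n)+J^{ext}(n),$$ where $F(n)=\sum_{j\in\Omega}n_j\big(\log(n_je^{E(j)})-1\big)$, $$\mathcal D_R(n)=\sum_{R\in\mathcal R_s}K_{\pi_VR}[n_U]\prod_{i\in I(R)\cap V}n_i^{-R(i)}\Big(\frac{K_{-\pi_VR}[n_U]}{K_{\pi_VR}[n_U]}\prod_{i\in V}n_i^{R(i)}-1\Big)\log\Big(\frac{K_{-\pi_VR}[n_U]}{K_{\pi_VR}[n_U]}\prod_{j\in V}n_j^{R(j)}\Big),$$ and $J^{ext}(n)=\sum_{j\in U}J^E_j(t)\log(n_je^{E(j)})$.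
   Context: A chemical network is $(\Omega,\mathcal R)$ with $\Omega=\{1,\dots,N\}$ and $\mathcal R$ a finite set of nonzero vectors of $\mathbb Z^N$. $I(R)=\{i:R(i)<0\}$, $F(R)=\{i:R(i)>0\}$. Bidirectional: $R\in\mathcal R\Rightarrow-R\in\mathcal R$. $\mathcal R_s$ contains exactly one of each pair $\{R,-R\}$ (the one with $\min I(R)<\min F(R)$); the matrix of reactions $\mathbf R$ has the elements $R_1,\dots$ of $\mathcal R_s$ as columns. Kinetic system: rates $\mathcal K:\mathcal R\to(0,\infty)$, $K_R=\mathcal K(R)$. Fluxes: $J_R(n)=K_R\prod_{j\in I(R)}n_j^{-R(j)}-K_{-R}\prod_{j\in F(R)}n_j^{R(j)}$. Detailed balance: there is $\bar N\in(0,\infty)^N$ with $J_R(\bar N)=0$ for all $R\in\mathcal R_s$. An energy is any $E\in\mathbb R^N$ with $\mathbf R^TE=w$, $w(i)=\log(K_{-R_i}/K_{R_i})$. External fluxes: $J^E_j(t)=-\sum_{R\in\mathcal R_s}R(j)J_R(n(t))$ (scalar) for $j\in U$, and $J^E(t)=\sum_{j\in U}J^E_j(t)e_j$. Reduction: $\pi_Av=(v(i))_{i\in A}$; $\mathcal R_V=\{\pi_V\bar R:\bar R\in\mathcal R,\pi_V\bar R\ne0\}$; $R\in\mathcal R_V$ is $1$-$1$ if exactly one $\bar R\in\mathcal R$ has $\pi_V\bar R=R$; reduced rates $K_R[n_U]=\sum_{\bar R\in\mathcal R:\pi_V\bar R=R}K_{\bar R}\prod_{s\in U\cap I(\bar R)}n_s^{-\bar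 R(s)}$. *)

(* Defs.v *)
From HB Require Import structures.
From mathcomp Require Import all_boot all_order all_algebra.
From mathcomp Require Import all_classical all_reals all_analysis.
Set Implicit Arguments. Unset Strict Implicit. Unset Printing Implicit Defensive.
Import Order.TTheory GRing.Theory Num.Theory.
Import numFieldNormedType.Exports.
Local Open Scope ring_scope.

(* Species Omega = 'I_N; a reaction is a vector of Z^N. *)
Definition reaction (N : nat) := {ffun 'I_N -> int}.

Definition zero_reaction (N : nat) : reaction N := [ffun => 0%R].

Definition ropp (N : nat) (r : reaction N) : reaction N := [ffun i => - r i].

Definition Iset (N : nat) (r : reaction N) : {set 'I_N} := [set i | r i < 0].
Definition Fset (N : nat) (r : reaction N) : {set 'I_N} := [set i | 0 < r i].

(* min of a set of indices; the empty set gets N, which plays the role of +oo *)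
Definition minidx (N : nat) (A : {set 'I_N}) : nat := \big[minn/N]_(i in A) (i : nat).

(* R_s : the representatives with min I(R) < min F(R) *)
Definition in_Rs (N : nat) (r : reaction N) : bool :=
  (minidx (Iset r) < minidx (Fset r))%N.
Definition Rs (N : nat) (RR : seq (reaction N)) : seq (reaction N) :=
  [seq r <- RR | in_Rs r].

Definition chem_network (N : nat) (RR : seq (reaction N)) : Prop :=
  uniq RR /\ (forall r, r \in RR -> r != zero_reaction N).

Definition bidirectional (N : nat) (RR : seq (reaction N)) : Prop :=
  forall r, r \in RR -> ropp r \in RR.

Definition flux (R : realType) (N : nat) (K : reaction N -> R) (r : reaction N)
  (n : 'I_N -> R) : R :=
  K r * \prod_(j in Iset r) n j ^ (- r j) - K (ropp r) * \prod_(j in Fset r) n j ^ (r j).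

Definition detailed_balance (R : realType) (N : nat) (RR : seq (reaction N))
  (K : reaction N -> R) : Prop :=
  exists Nb : 'I_N -> R, (forall j, 0 < Nb j) /\
    (forall r, r \in Rs RR -> flux K r Nb = 0).

Definition is_energy (R : realType) (N : nat) (RR : seq (reaction N))
  (K : reaction N -> R) (E : 'I_N -> R) : Prop :=
  forall r, r \in Rs RR -> \sum_j (r j)%:~R * E j = ln (K (ropp r) / K r).

(* pi_V, represented as the vector of Z^N vanishing outside V *)
Definition piV (N : nat) (V : {set 'I_N}) (r : reaction N) : reaction N :=
  [ffun i => if i \in V then r i else 0].

Definition RV (N : nat) (RR : seq (reaction N)) (V : {set 'I_N}) : seq (reaction N) :=
  [seq piV V r | r <- RR & piV V r != zero_reaction N].

Definition one_one (N : nat) (RR : seq (reaction N)) (V : {set 'I_N})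
  (rv : reaction N) : Prop :=
  count (fun r => piV V r == rv) RR = 1%N.

Definition Kred (R : realType) (N : nat) (RR : seq (reaction N)) (K : reaction N -> R)
  (U : {set 'I_N}) (nU : 'I_N -> R) (rv : reaction N) : R :=
  \sum_(r <- RR | piV (~: U) r == rv)
     K r * \prod_(s in U :&: Iset r) nU s ^ (- r s).

Definition JE (R : realType) (N : nat) (RR : seq (reaction N)) (K : reaction N -> R)
  (n : 'I_N -> R) (j : 'I_N) : R :=
  - \sum_(r <- Rs RR) (r j)%:~R * flux K r n.

Definition Fenergy (R : realType) (N : nat) (E : 'I_N -> R) (n : 'I_N -> R) : R :=
  \sum_j n j * (ln (n j * expR (E j)) - 1).

Definition DR (R : realType) (N : nat) (RR : seq (reaction N)) (K : reaction N -> R)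
  (U : {set 'I_N}) (nU : 'I_N -> R) (n : 'I_N -> R) : R :=
  \sum_(r <- Rs RR)
    (Kred RR K U nU (piV (~: U) r)
      * \prod_(i in Iset r :&: ~: U) n i ^ (- r i)
      * (Kred RR K U nU (ropp (piV (~: U) r)) / Kred RR K U nU (piV (~: U) r)
           * \prod_(i in ~: U) n i ^ (r i) - 1)
      * ln (Kred RR K U nU (ropp (piV (~: U) r)) / Kred RR K U nU (piV (~: U) r)
           * \prod_(j in ~: U) n j ^ (r j))).

Definition Jext (R : realType) (N : nat) (RR : seq (reaction N)) (K : reaction N -> R)
  (E : 'I_N -> R) (U : {set 'I_N}) (n : 'I_N -> R) : R :=
  \sum_(j in U) JE RR K n j * ln (n j * expR (E j)).

(* Main.v *)
Require Import Defs.
From HB Require Import structures.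
From mathcomp Require Import all_boot all_order all_algebra.
From mathcomp Require Import all_classical all_reals all_analysis.
From mathcomp Require Import ring lra.
Import Order.TTheory GRing.Theory Num.Theory.
Import numFieldNormedType.Exports.
Local Open Scope ring_scope.

Lemma ln_exprz (R : realType) (x : R) (z : int) : 0 < x -> ln (x ^ z) = z%:~R * ln x.
Proof.
move=> x0; case: z => k.
  by rewrite -exprnP lnXn // pmulrn mulr_natl.
rewrite NegzE -exprnN lnV ?posrE ?exprn_gt0 // lnXn // intrN pmulrn mulNr mulr_natl.
by rewrite ?pmulrn.
Qed.

Lemma ln_prod (R : realType) (I : finType) (P : pred I) (g : I -> R) :
  (forall i, 0 < g i) -> ln (\prod_(i | P i) g i) = \sum_(i | P i) ln (g i).
Proof.
move=> gp.
have [-> _] : (\sum_(i | P i) ln (g i)) = ln (\prod_(i | P i) g i) /\ 0 < \prod_(i | P i) g i.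
  apply: (big_ind2 (fun s p => s = ln p /\ 0 < p)).
  - by rewrite ln1.
  - move=> x1 x2 y1 y2 [-> h1] [-> h2]; split; last exact: mulr_gt0.
    by rewrite lnM ?posrE.
  - by move=> i _; split.
done.
Qed.

Lemma Kred_one (R : realType) N (RR : seq (reaction N)) (K : reaction N -> R) U nU r0 :
  r0 \in RR -> count (fun r => piV (~: U) r == piV (~: U) r0) RR = 1%N ->
  Kred RR K U nU (piV (~: U) r0) = K r0 * \prod_(s in U :&: Iset r0) nU s ^ (- r0 s).
Proof.
move=> r0in hc; rewrite /Kred -(@big_filter _ _ _ _ RR).
have : r0 \in [seq r <- RR | piV (~: U) r == piV (~: U) r0] by rewrite mem_filter eqxx.
have : size [seq r <- RR | piV (~: U) r == piV (~: U) r0] = 1%N by rewrite size_filter.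
case: [seq r <- _ | _] => [|x [|y s]] //= _.
by rewrite inE => /eqP ->; rewrite big_seq1.
Qed.

Lemma prods (R : realType) N (U : {set 'I_N}) (r : reaction N) (x nU : 'I_N -> R) :
  (forall i, 0 < x i) -> (forall i, i \in U -> x i = nU i) ->
  [/\ \prod_(s in U :&: Iset r) nU s ^ (- r s) * \prod_(i in Iset r :&: ~: U) x i ^ (- r i)
        = \prod_(i in Iset r) x i ^ (- r i),
      \prod_(i in Fset r) x i ^ (r i) = \prod_i x i ^ (r i) * \prod_(i in Iset r) x i ^ (- r i)
    & \prod_(s in U :&: Iset (ropp r)) nU s ^ (- ropp r s) * \prod_(i in ~: U) x i ^ (r i)
        = \prod_i x i ^ (r i) * \prod_(s in U :&: Iset r) nU s ^ (- r s)].
Proof.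
move=> xp xU.
have nz i : x i ^ r i != 0 by rewrite gt_eqF // exprz_gt0.
have key i : (if 0 < r i then x i ^ r i else 1) = x i ^ r i * (if r i < 0 then x i ^ (- r i) else 1).
  rewrite -invr_expz; case: (ltgtP (r i) 0) => h.
  - by rewrite mulfV.
  - by rewrite mulr1.
  - by rewrite h expr0z mulr1.
split.
- rewrite !(big_mkcond (fun i => i \in _)) -!big_split /=; apply: eq_bigr => i _.
  rewrite !inE; case: (boolP (i \in U)) => iU /=; first rewrite -xU //.
    by case: (r i < 0); rewrite ?mulr1.
  by case: (r i < 0); rewrite ?mul1r.
- rewrite !(big_mkcond (fun i => i \in _)) -!big_split /=; apply: eq_bigr => i _.
  by rewrite !inE key.
- rewrite !(big_mkcond (fun i => i \in _)) -!big_split /=; apply: eq_bigr => i _.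
  rewrite !inE /ropp !ffunE oppr_lt0 opprK; case: (boolP (i \in U)) => iU /=.
    by rewrite -xU // mulr1 key.
  by rewrite mulr1 mul1r.
Qed.
Lemma deriv_term (R : realType) (f : R -> R) (e t df : R) : 0 < f t -> is_derive t 1 f df ->
  is_derive t 1 (fun s => f s * (ln (f s * expR e) - 1)) (df * ln (f t * expR e)).
Proof.
move=> ft0 fd.
have hg : is_derive t 1 (fun s => f s * expR e) (df * expR e).
  have h1 := is_deriveM fd (is_derive_cst (expR e) t 1).
  rewrite scaler0 add0r /= in h1.
  rewrite mulrC; exact: h1.
have gt0 : 0 < f t * expR e by rewrite mulr_gt0 // expR_gt0.
have hl : is_derive t 1 ((fun s => ln (f s * expR e)) - cst 1)
   ((f t * expR e)^-1 * (df * expR e) - 0).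
  apply: is_deriveB.
  have h2 := @is_derive1_comp R (@ln R) (fun s => f s * expR e) t _ _ (is_derive1_ln gt0) hg. exact: h2.
have h := is_deriveM fd hl.
rewrite /= in h.
have -> : df * ln (f t * expR e) =  f t *: ((f t * expR e)^-1 * (df * expR e) - 0) + (ln (f t * expR e) - 1) *: df.
  rewrite /GRing.scale /= subr0.
  have ? : f t != 0 by rewrite gt_eqF.
  have ? : expR e != 0 by rewrite gt_eqF ?expR_gt0.
  rewrite invfM -mulrA [_^-1 * (df * _)]mulrC -mulrA mulfV // mulr1 mulrA mulfV // mul1r.
  by rewrite mulrBl mul1r addrC subrK mulrC.
have -> : (fun s => f s * (ln (f s * expR e) - 1)) = f * ((fun s => ln (f s * expR e)) - cst 1) by [].
exact h.
Qed.
Lemma const_on (R : realType) (f : R -> R) (T : R) : 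
  (forall t, 0<t<T -> is_derive t 1 f 0) -> (f @ 0^'+ --> f 0)%classic ->
  forall t, 0<t<T -> f t = f 0.
Proof.
move=> fd f0 t /andP[t0 tT].
have H1 : forall x, x \in `]0, t[ -> is_derive x 1 f ((fun _ => 0) x).
  move=> x; rewrite in_itv /= => /andP[x0 xt]; apply: fd.
  by rewrite x0 (lt_trans xt tT).
have H2 : {within `[0, t], continuous f}%classic.
  apply: derivable_oo_LRcontinuous_within; split => //.
  + move=> x; rewrite in_itv /= => /andP[x0 xt].
    have := fd x; rewrite x0 (lt_trans xt tT) => /(_ isT) h; exact: ex_derive.
  + apply: cvg_at_left_filter.
    apply/differentiable_continuous; rewrite -derivable1_diffP.
    have := fd t; rewrite t0 tT => /(_ isT) h; exact: ex_derive.
have [c _] := @MVT R f (fun _ => 0) 0 t t0 H1 H2.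
by rewrite mul0r => /eqP; rewrite subr_eq0 => /eqP.
Qed.

Theorem proposition7p4 (R : realType) (N : nat) (RR : seq (reaction N))
  (K : reaction N -> R) (E : 'I_N -> R) (U : {set 'I_N}) (nU : 'I_N -> R)
  (T : R) (n : R -> 'I_N -> R) :
  chem_network RR -> bidirectional RR ->
  (forall r, r \in RR -> 0 < K r) ->
  detailed_balance RR K -> is_energy RR K E ->
  U != finset.set0 ->
  (forall j, j \in U -> 0 < nU j) ->
  (forall r, r \in RR -> piV (~: U) r != zero_reaction N) ->
  (forall rv, rv \in RV RR (~: U) -> one_one RR (~: U) rv) ->
  0 < T ->
  (forall t, 0 <= t < T -> forall j, 0 < n t j) ->
  (forall t, 0 < t < T -> forall j,
     is_derive t 1 (fun s => n s j)
       (\sum_(r <- Rs RR) (r j)%:~R * flux K r (n t)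
        + (if j \in U then JE RR K (n t) j else 0))) ->
  (forall j, ((fun s => n s j) @ 0^'+ --> n 0 j)%classic) ->
  (forall j, j \in U -> n 0 j = nU j) ->
  forall t, 0 < t < T ->
    is_derive t 1 (fun s => Fenergy E (n s))
      (- DR RR K U nU (n t) + Jext RR K E U (n t)).
Proof.
move=> [uRR nz] bid Kpos _ Een _ nUpos piVnz oneone T0 npos nder ncont n0U t ht.
have /andP[t0 tT] := ht.
have nUeq : forall j, j \in U -> n t j = nU j.
  move=> j jU; rewrite -n0U //.
  apply: (@const_on R (fun s => n s j) T _ (ncont j) t ht).
  move=> s hs; have := nder s hs j; rewrite jU /JE addrN; exact.
have nt0 : forall j, 0 < n t j by apply: npos; rewrite ltW.
set x := n t.
have HD := @is_derive_sum R R R N (fun j s => n s j * (ln (n s j * expR (E j)) - 1)) t 1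
  (fun j => (\sum_(r <- Rs RR) (r j)%:~R * flux K r (n t)
        + (if j \in U then JE RR K (n t) j else 0)) * ln (x j * expR (E j)))
  (fun j => @deriv_term R _ (E j) _ _ (nt0 j) (nder t ht j)).
rewrite fct_sumE in HD.
apply: is_derive_eq HD _.
rewrite (eq_bigr _ (fun i _ => mulrDl _ _ _)) big_split /=.
congr (_ + _); last first.
  rewrite /Jext [RHS]big_mkcond; apply: eq_bigr => i _; case: ifP => _ //.
  by rewrite mul0r.
rewrite /DR -sumrN (eq_bigr _ (fun i _ => mulr_suml _ _ _ _)) exchange_big /=.
apply: eq_big_seq => r rRs.
have rRR : r \in RR by move: rRs; rewrite mem_filter => /andP[].
have rmRR := bid r rRR.
have Kr := Kpos r rRR; have Kmr := Kpos _ rmRR.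
have oo r0 : r0 \in RR -> count (fun r' => piV (~: U) r' == piV (~: U) r0) RR = 1%N.
  move=> h; apply: oneone; rewrite /RV; apply/mapP; exists r0 => //.
  by rewrite mem_filter piVnz // h.
have ropp_piV : ropp (piV (~: U) r) = piV (~: U) (ropp r).
  by apply/ffunP => i; rewrite /ropp /piV !ffunE; case: ifP; rewrite ?oppr0.
rewrite ropp_piV (@Kred_one R N RR K U nU (ropp r) rmRR (oo _ rmRR)).
rewrite (@Kred_one R N RR K U nU r rRR (oo _ rRR)).
have [P1 P2 P3] := @prods R N U r x nU nt0 nUeq.
have Xpos : 0 < \prod_i x i ^ r i by apply: prodr_gt0 => i _; exact: exprz_gt0.
have PUIpos : 0 < \prod_(s in U :&: Iset r) nU s ^ (- r s).
  apply: prodr_gt0 => i; rewrite inE => /andP[iU _]; exact: exprz_gt0 (nUpos _ iU).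
have baPos : 0 < K (ropp r) / K r by rewrite divr_gt0.
have L : \sum_i (r i)%:~R * flux K r x * ln (x i * expR (E i))
    = flux K r x * ln (K (ropp r) / K r * \prod_i x i ^ r i).
  rewrite (eq_bigr (fun i => ((r i)%:~R * ln (x i) + (r i)%:~R * E i) * flux K r x)); last first.
    move=> i _; have h1 : x i \is Num.pos by rewrite posrE. 
    have h2 : expR (E i) \is Num.pos by rewrite posrE expR_gt0.
    by rewrite (lnM h1 h2) expRK mulrAC -mulrDr.
  rewrite -mulr_suml mulrC big_split /= (Een r rRs).
  rewrite [in RHS]lnM; [|by rewrite posrE|by rewrite posrE].
  rewrite [in RHS]addrC.
  congr (_ * (_ + _)).
  rewrite ln_prod; last by move=> i; exact: exprz_gt0.
  by apply: eq_bigr => i _; rewrite ln_exprz.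
rewrite L.
have HQ : K (ropp r) * \prod_(s in U :&: Iset (ropp r)) nU s ^ (- ropp r s) /
   (K r * \prod_(s in U :&: Iset r) nU s ^ (- r s)) * \prod_(i in ~: U) x i ^ r i
   = K (ropp r) / K r * \prod_i x i ^ r i.
  transitivity (K (ropp r) / (K r * \prod_(s in U :&: Iset r) nU s ^ (- r s)) *
    (\prod_(s in U :&: Iset (ropp r)) nU s ^ (- ropp r s) * \prod_(i in ~: U) x i ^ r i)).
    by ring.
  rewrite P3.
  have ? : K r != 0 by rewrite gt_eqF.
  have ? : \prod_(s in U :&: Iset r) nU s ^ (- r s) != 0 by rewrite gt_eqF.
  by field; apply/andP.
rewrite HQ -[K r * _ * \prod_(i in Iset r :&: ~: U) _]mulrA P1 /flux P2.
have ? : K r != 0 by rewrite gt_eqF.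
by field.
Qed.
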